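(* Let $I$ be an ideal in $P=\mathbb{Q}[x_1,\dots,x_n]$, let $\Delta(I)$ be its universal denominator, and let $p$ be a prime not dividing $\Delta(I)$. Then the ideal $I_{(p,\sigma)}\subseteq\mathbb{F}_p[x_1,\dots,x_n]$ does not depend on the term ordering $\sigma$ on $\mathbb{T}^n$.
   Context: $\mathbb{T}^n$ is the monoid of power-products in $x_1,\dots,x_n$. For $f\in P$, $\operatorname{den}(f)$ is the positive least common multiple of the denominators of the coefficients of $f$ (with $\operatorname{den}(0)=1$); for a set $F$, $\operatorname{den}(F)$ is the lcm of the $\operatorname{den}(f)$, $f\in F$. For a term ordering $\sigma$ with $G_\sigma$ the reduced $\sigma$-Gröbner basis of $I$, set $\operatorname{den}_\sigma(I)=\operatorname{den}(G_\sigma)$. Since an ideal has only finitely many distinct reduced Gröbner bases (finiteness of the Gröbner fan), the universal denominator $\Delta(I)$, defined as the least common multiple of all $\operatorname{den}_\sigma(I)$ as $\sigma$ ranges over all term orderings, is a well-defined positive integer. For a prime $p\nmid\operatorname{den}_\sigma(I)$, $\pi_p$ denotes coefficientwise reduction modulo $p$ and $I_{(p,\sigma)}$ is the ideal of $\mathbb{F}_p[x_1,\dots,x_n]$ generated by $\pi_p(G_\sigma)$. *)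

(* Defs.v *)
From HB Require Import structures.
From mathcomp Require Import all_boot all_order all_algebra.
From mathcomp Require Import mpoly.
Set Implicit Arguments. Unset Strict Implicit. Unset Printing Implicit Defensive.
Import Order.TTheory GRing.Theory Num.Theory.
Local Open Scope ring_scope.

Section GB.
Variable n : nat.

Definition term_order (le : rel 'X_{1..n}) : Prop :=
  [/\ reflexive le, antisymmetric le, transitive le & total le] /\
  (forall m1 m2 m, le m1 m2 -> le (m1 + m)%MM (m2 + m)%MM) /\
  (forall m, le 0%MM m).

(* Leading power-product of f w.r.t. le: the le-maximum of the support
   (irrelevant value 0 for f = 0). *)
Definition lm (R : nzRingType) (le : rel 'X_{1..n}) (f : {mpoly R[n]}) : 'X_{1..n} :=
  foldr (fun m acc => if le acc m then m else acc) 0%MM (msupp f).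

Definition is_ideal (R : comNzRingType) (I : {mpoly R[n]} -> Prop) : Prop :=
  [/\ I 0, (forall f g, I f -> I g -> I (f + g))
    & (forall h f, I f -> I (h * f))].

Definition ideal_gen (R : comNzRingType) (G : seq {mpoly R[n]}) (f : {mpoly R[n]}) : Prop :=
  exists c : 'I_(size G) -> {mpoly R[n]}, f = \sum_(i < size G) c i * G`_i.

(* G (a duplicate-free list representing a finite set) is the reduced
   le-Groebner basis of the ideal I. *)
Definition reduced_GB (R : comNzRingType) (le : rel 'X_{1..n})
    (I : {mpoly R[n]} -> Prop) (G : seq {mpoly R[n]}) : Prop :=
  [/\ uniq G,
      (forall f, I f <-> ideal_gen G f),
      (forall f, I f -> f != 0 -> exists2 g, g \in G & (lm le g <= lm le f)%MM),
      (forall g, g \in G -> g != 0 /\ g@_(lm le g) = 1)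
    & (forall g g' m, g \in G -> g' \in G -> g != g' -> m \in msupp g ->
          ~~ (lm le g' <= m)%MM)].

(* den(f): lcm of the denominators of the coefficients (den 0 = 1) *)
Definition den (f : {mpoly rat[n]}) : nat :=
  \big[lcmn/1%N]_(m <- msupp f) `|denq (f@_m)|%N.

Definition den_set (G : seq {mpoly rat[n]}) : nat :=
  \big[lcmn/1%N]_(g <- G) den g.

(* D is the universal denominator of I: the lcm of all den_sigma(I),
   characterized by its universal property. *)
Definition universal_denominator (I : {mpoly rat[n]} -> Prop) (D : nat) : Prop :=
  (forall le G, term_order le -> reduced_GB le I G -> (den_set G %| D)%N) /\
  (forall m : nat,
     (forall le G, term_order le -> reduced_GB le I G -> (den_set G %| m)%N) ->
     (D %| m)%N).

End GB.

Definition pi_p (p n : nat) (f : {mpoly rat[n]}) : {mpoly 'F_p[n]} :=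
  map_mpoly (fun q : rat => ratr q : 'F_p) f.

(* Main.v *)
Require Import Defs.
From HB Require Import structures.
From mathcomp Require Import all_boot all_order all_algebra.
From mathcomp Require Import mpoly.
From mathcomp Require Import ring.
Require Import Defs.
From Stdlib Require Import Classical.
Set Implicit Arguments. Unset Strict Implicit. Unset Printing Implicit Defensive.
Import Order.TTheory GRing.Theory Num.Theory.
Local Open Scope ring_scope.

Section Scal.
Variable F : fieldType.

Definition pint (q : rat) : bool := (denq q)%:~R != 0 :> F.

Lemma pint_frac (q : rat) (x y : int) :
  q * y%:~R = x%:~R -> y%:~R != 0 :> F ->
  pint q /\ ratr q = x%:~R / y%:~R :> F.
Proof.
move=> hq hy.
have e : numq q * y = x * denq q.
  apply: (@intr_inj rat); rewrite !rmorphM /= numqE -hq; ring.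
have eF : (numq q)%:~R * y%:~R = x%:~R * (denq q)%:~R :> F.
  by rewrite -!intrM e.
have hd : pint q.
  apply/negP => /eqP h0.
  move: eF; rewrite h0 mulr0 => /eqP; rewrite mulf_eq0 (negbTE hy) orbF => /eqP hn.
  have /coprimezP [[u v] /= huv] : coprimez (numq q) (denq q).
    by rewrite coprimezE coprime_num_den.
  have : (1 : int)%:~R = 0 :> F.
    by rewrite -huv rmorphD !rmorphM /= hn h0 !mulr0 addr0.
  by move/eqP; rewrite oner_eq0.
split=> //; rewrite /ratr.
apply: (@mulIf _ ((denq q)%:~R * y%:~R)); first by rewrite mulf_neq0.
by rewrite !mulrA mulfVK // mulrAC mulfVK // eF.
Qed.

Lemma pint_num_den q : pint q -> ratr q = (numq q)%:~R / (denq q)%:~R :> F.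
Proof. by []. Qed.

Lemma pint_ratr_D a b : pint a -> pint b ->
  pint (a + b) /\ ratr (a + b) = ratr a + ratr b :> F.
Proof.
move=> ha hb.
have := @pint_frac (a + b) (numq a * denq b + numq b * denq a) (denq a * denq b).
case.
- rewrite rmorphD !rmorphM /= !numqE; ring.
- by rewrite rmorphM mulf_neq0.
move=> -> ->; split=> //; rewrite /ratr rmorphD !rmorphM /=.
by field; apply/andP; split.
Qed.

Lemma pint_ratr_M a b : pint a -> pint b ->
  pint (a * b) /\ ratr (a * b) = ratr a * ratr b :> F.
Proof.
move=> ha hb.
have := @pint_frac (a * b) (numq a * numq b) (denq a * denq b).
case.
- rewrite !rmorphM /= !numqE; ring.
- by rewrite rmorphM mulf_neq0.
move=> -> ->; split=> //; rewrite /ratr !rmorphM /=.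
by field; apply/andP; split.
Qed.

Lemma pint_ratr_N a : pint a -> pint (- a) /\ ratr (- a) = - ratr a :> F.
Proof.
move=> ha.
have := @pint_frac (- a) (- numq a) (denq a).
case.
- rewrite rmorphN /= numqE; ring.
- exact: ha.
move=> -> ->; split=> //; rewrite /ratr rmorphN /=; ring.
Qed.

Lemma pint1 : pint 1.
Proof. by rewrite /pint (denq_int 1) oner_eq0. Qed.

Lemma ratr1' : ratr 1 = 1 :> F.
Proof. by rewrite /ratr (numq_int 1) (denq_int 1) divr1. Qed.

Lemma pint_subring_closed : subring_closed pint.
Proof.
split; first exact: pint1.
- move=> a b ha hb; have [hn _] := pint_ratr_N hb.
  by case: (pint_ratr_D ha hn).
- by move=> a b ha hb; case: (pint_ratr_M ha hb).
Qed.

Definition pintP : {pred rat} := fun q => pint q.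

HB.instance Definition _ := GRing.isSubringClosed.Build rat pintP pint_subring_closed.

Record zp := Zp { zval : rat; zvalP : pintP zval }.

HB.instance Definition _ := [isSub for zval].
HB.instance Definition _ := [Choice of zp by <:].
HB.instance Definition _ := [SubChoice_isSubComNzRing of zp by <:].

Definition phi (x : zp) : F := ratr (zval x).

Lemma zvalD (x y : zp) : zval (x + y) = zval x + zval y. Proof. by []. Qed.
Lemma zvalM (x y : zp) : zval (x * y) = zval x * zval y. Proof. by []. Qed.
Lemma zvalN (x : zp) : zval (- x) = - zval x. Proof. by []. Qed.
Lemma zval1 : zval 1 = 1. Proof. by []. Qed.

Lemma phi_is_zmod : zmod_morphism phi.
Proof.
move=> x y; rewrite /phi zvalD zvalN.
have [hn hN] := pint_ratr_N (zvalP y).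
case: (pint_ratr_D (zvalP x) hn) => _ ->; by rewrite hN.
Qed.

Lemma phi_is_monoid : monoid_morphism phi.
Proof.
split; first by rewrite /phi zval1 ratr1'.
move=> x y; rewrite /phi zvalM.
by case: (pint_ratr_M (zvalP x) (zvalP y)).
Qed.

HB.instance Definition _ := GRing.isZmodMorphism.Build zp F phi phi_is_zmod.
HB.instance Definition _ := GRing.isMonoidMorphism.Build zp F phi phi_is_monoid.

Definition zvalr (x : zp) : rat := zval x.
Lemma zvalr_is_zmod : zmod_morphism zvalr. Proof. by []. Qed.
Lemma zvalr_is_monoid : monoid_morphism zvalr. Proof. by []. Qed.
HB.instance Definition _ := GRing.isZmodMorphism.Build zp rat zvalr zvalr_is_zmod.
HB.instance Definition _ := GRing.isMonoidMorphism.Build zp rat zvalr zvalr_is_monoid.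
Lemma zvalr_inj : injective zvalr.
Proof. exact: val_inj. Qed.
End Scal.
Section Dickson.
Variable n : nat.
Implicit Types (m : 'X_{1..n}).

Definition sumc (i : 'I_n) (F : seq 'X_{1..n}) : nat :=
  foldr (fun (y : 'X_{1..n}) acc => (y i + acc)%N) 0%N F.

Lemma sumc_ge i (F : seq 'X_{1..n}) (f : 'X_{1..n}) : f \in F -> (f i <= sumc i F)%N.
Proof.
elim: F => //= y F IH; rewrite inE => /orP [/eqP ->|/IH h]; first exact: leq_addr.
exact: (leq_trans h (leq_addl _ _)).
Qed.

Lemma dickson_k (k : nat) : (k <= n)%N -> forall S : 'X_{1..n} -> Prop,
  exists F : seq 'X_{1..n}, (forall f, f \in F -> S f) /\
    (forall s, S s -> exists2 f, f \in F & forall i : 'I_n, (i < k)%N -> (f i <= s i)%N).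
Proof.
elim: k => [|k IH] hk S.
  case: (classic (exists s, S s)) => [[s0 hs0]|hno].
    exists [:: s0]; split; first by move=> f; rewrite inE => /eqP ->.
    by move=> s _; exists s0; rewrite ?inE.
  exists [::]; split=> // s hs; exfalso; apply: hno; by exists s.
have hkn : (k < n)%N by [].
pose i0 := Ordinal hkn.
have [F0 [F0S F0c]] := IH (ltnW hk) S.
pose e := sumc i0 F0.
have low : forall e', exists F : seq 'X_{1..n}, (forall f, f \in F -> S f) /\
    (forall s, S s -> (s i0 < e')%N ->
       exists2 f, f \in F & forall i : 'I_n, (i < k.+1)%N -> (f i <= s i)%N).
  elim=> [|e' [F' [F'S F'c]]].
    by exists [::]; split.
  have [Fe [FeS Fec]] := IH (ltnW hk) (fun s => S s /\ s i0 = e').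
  exists (F' ++ Fe); split.
    by move=> f; rewrite mem_cat => /orP [/F'S|/FeS []].
  move=> s hs; rewrite ltnS leq_eqVlt => /orP [/eqP he|hlt]; last first.
    by have [f hf hfs] := F'c s hs hlt; exists f; rewrite ?mem_cat ?hf.
  have [f hf hfs] := Fec s (conj hs he).
  exists f; first by rewrite mem_cat hf orbT.
  move=> i; rewrite ltnS leq_eqVlt => /orP [/eqP hi|hi]; last exact: hfs.
  have -> : i = i0 by apply: val_inj.
  by have [_ ->] := FeS f hf; rewrite he.
have [F1 [F1S F1c]] := low e.
exists (F0 ++ F1); split.
  by move=> f; rewrite mem_cat => /orP [/F0S|/F1S].
move=> s hs; case: (ltnP (s i0) e) => he.
  by have [f hf hfs] := F1c s hs he; exists f; rewrite ?mem_cat ?hf ?orbT.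
have [f hf hfs] := F0c s hs; exists f; first by rewrite mem_cat hf.
move=> i; rewrite ltnS leq_eqVlt => /orP [/eqP hi|hi]; last exact: hfs.
have -> : i = i0 by apply: val_inj.
exact: leq_trans (sumc_ge i0 hf) he.
Qed.

Lemma dickson (S : 'X_{1..n} -> Prop) :
  exists F : seq 'X_{1..n}, (forall f, f \in F -> S f) /\
    (forall s, S s -> exists2 f, f \in F & (f <= s)%MM).
Proof.
have [F [FS Fc]] := dickson_k (leqnn n) S.
exists F; split=> // s hs; have [f hf hfs] := Fc s hs.
by exists f => //; apply/mnm_lepP => i; apply: hfs.
Qed.

Variable le : rel 'X_{1..n}.
Hypothesis hle : term_order le.

Lemma le_refl : reflexive le. Proof. by case: hle => [[]]. Qed.
Lemma le_anti : antisymmetric le. Proof. by case: hle => [[]]. Qed.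
Lemma le_trans : transitive le. Proof. by case: hle => [[]]. Qed.
Lemma le_total : total le. Proof. by case: hle => [[]]. Qed.
Lemma le_add m1 m2 m : le m1 m2 -> le (m1 + m)%MM (m2 + m)%MM.
Proof. by case: hle => _ [h _]; apply: h. Qed.
Lemma le_0 m : le 0%MM m. Proof. by case: hle => _ [_ h]; apply: h. Qed.

Lemma le_div m1 m2 : (m1 <= m2)%MM -> le m1 m2.
Proof.
move=> h; rewrite -(submK h).
by have := le_add m1 (le_0 (m2 - m1)); rewrite add0m addmC.
Qed.

Lemma min_seq (F : seq 'X_{1..n}) x0 : x0 \in F ->
  exists2 m, m \in F & forall x, x \in F -> le m x.
Proof.
elim: F x0 => //= y F IH x0 _.
case: F IH => [|z F] IH.
  exists y; first by rewrite inE.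
  by move=> x; rewrite inE => /eqP ->; apply: le_refl.
have [m hm hmin] := IH z (mem_head _ _).
case: (boolP (le y m)) => hym.
  exists y; first by rewrite inE eqxx.
  move=> x; rewrite inE => /orP [/eqP ->|/hmin]; first exact: le_refl.
  exact: le_trans.
exists m; first by rewrite inE hm orbT.
have hmy : le m y by case/orP: (le_total m y) => // h; rewrite h in hym.
by move=> x; rewrite inE => /orP [/eqP ->|/hmin].
Qed.

Lemma le_min (S : 'X_{1..n} -> Prop) s0 : S s0 ->
  exists m, S m /\ forall s, S s -> le m s.
Proof.
move=> hs0; have [F [FS Fc]] := dickson S.
have [f0 hf0 _] := Fc s0 hs0.
have [m hm hmin] := min_seq hf0.
exists m; split; first exact: FS.
move=> s hs; have [f hf hfs] := Fc s hs.
exact: le_trans (hmin f hf) (le_div hfs).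
Qed.

Lemma le_ind (P : 'X_{1..n} -> Prop) :
  (forall m, (forall m', le m' m -> m' != m -> P m') -> P m) -> forall m, P m.
Proof.
move=> H m; apply: NNPP => hm.
have [m0 [hm0 hmin]] := le_min (S := fun m => ~ P m) hm.
apply: hm0; apply: H => m' h1 h2; apply: NNPP => hm'.
have h3 := hmin m' hm'.
by move: h2; rewrite (@le_anti m' m0) ?eqxx // h1 h3.
Qed.

Definition fo (s : seq 'X_{1..n}) :=
  foldr (fun m acc => if le acc m then m else acc) 0%MM s.

Lemma fo_max s x : x \in s -> le x (fo s).
Proof.
elim: s => //= y s IH; rewrite inE => /orP [/eqP ->|/IH h].
  by case: ifP => // h; [apply: le_refl | case/orP: (le_total y (fo s)) => // h'; rewrite h' in h].
by case: ifP => // h'; apply: le_trans h h'.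
Qed.

Lemma fo_in s : s != [::] -> fo s \in s.
Proof.
elim: s => //= y s IH _; case: ifP => h; first by rewrite mem_head.
case: s IH h => [|z s] IH h; first by rewrite /= le_0 in h.
by rewrite inE IH ?orbT.
Qed.

Lemma lm_max (R : nzRingType) (f : {mpoly R[n]}) m : m \in msupp f -> le m (lm le f).
Proof. exact: fo_max. Qed.

Lemma lm_in (R : nzRingType) (f : {mpoly R[n]}) : f != 0 -> lm le f \in msupp f.
Proof. by move=> hf; apply: fo_in; rewrite msupp_eq0. Qed.

Lemma reduce_lt (R : comNzRingType) (f g : {mpoly R[n]}) :
  g@_(lm le g) = 1 -> (lm le g <= lm le f)%MM ->
  forall m, m \in msupp (f - (f@_(lm le f) *: 'X_[lm le f - lm le g]) * g) ->
    le m (lm le f) && (m != lm le f).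
Proof.
move=> hg1 hdiv m.
set d := (lm le f - lm le g)%MM; set c := f@_(lm le f).
have e1 : (c *: 'X_[d]) * g = c *: (g * 'X_[d]) by rewrite -scalerAl mulrC.
have hlf : lm le f = (d + lm le g)%MM by rewrite /d submK.
rewrite e1 mcoeff_msupp mcoeffB mcoeffZ.
case: (eqVneq m (lm le f)) => [->|hne].
  by rewrite {2}hlf mcoeffMX hg1 mulr1 subrr eqxx.
rewrite andbT.
case: (eqVneq (f@_m) 0) => hfm.
  rewrite hfm sub0r oppr_eq0 => hm.
  have hm' : (g * 'X_[d])@_m != 0 by apply: contraNneq hm => ->; rewrite mulr0.
  rewrite -mcoeff_msupp (perm_mem (msuppMX g d)) in hm'.
  case/mapP: hm' => m' hm' ->.
  rewrite hlf addmC [(d + lm le g)%MM]addmC.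
  by apply: le_add; apply: lm_max.
by move=> _; apply: lm_max; rewrite mcoeff_msupp.
Qed.

End Dickson.

Section IG.
Variables (n : nat) (R : comNzRingType) (G : seq {mpoly R[n]}).

Lemma ig0 : ideal_gen G 0.
Proof. by exists (fun _ => 0); rewrite big1 // => i _; rewrite mul0r. Qed.

Lemma igD a b : ideal_gen G a -> ideal_gen G b -> ideal_gen G (a + b).
Proof.
move=> [c ->] [c' ->]; exists (fun i => c i + c' i).
by rewrite -big_split; apply: eq_bigr => i _; rewrite mulrDl.
Qed.

Lemma igM h a : ideal_gen G a -> ideal_gen G (h * a).
Proof.
move=> [c ->]; exists (fun i => h * c i).
by rewrite mulr_sumr; apply: eq_bigr => i _; rewrite mulrA.
Qed.

Lemma igG x : x \in G -> ideal_gen G x.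
Proof.
move=> hx; have hi : (index x G < size G)%N by rewrite index_mem.
exists (fun i => if val i == index x G then 1 else 0).
rewrite (bigD1 (Ordinal hi)) //= eqxx mul1r big1 ?addr0 ?nth_index //.
move=> i hne; case: ifP => h; last by rewrite mul0r.
by move: hne; rewrite (_ : i = Ordinal hi) ?eqxx //; apply: val_inj; apply/eqP.
Qed.

Lemma ig_sum (I : finType) (c : I -> {mpoly R[n]}) :
  (forall i, ideal_gen G (c i)) -> ideal_gen G (\sum_i c i).
Proof.
move=> h; apply: (big_ind (ideal_gen G)) => //; [exact: ig0 | exact: igD].
Qed.

End IG.

Section Main.
Variables (F : fieldType) (n : nat).

Definition piF (f : {mpoly rat[n]}) : {mpoly F[n]} :=
  map_mpoly (fun q : rat => ratr q : F) f.

Definition lifted (f : {mpoly rat[n]}) :=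
  exists f' : {mpoly (zp F)[n]}, f = map_mpoly (@zvalr F) f'.

Lemma map_comp (R S T : nzRingType) (f : {rmorphism R -> S}) (g : S -> T)
  (p : {mpoly R[n]}) : injective f ->
  map_mpoly g (map_mpoly f p) = map_mpoly (g \o f) p.
Proof.
move=> inj; rewrite {1}/map_mpoly /mmap (perm_big _ (msupp_map_mpoly p inj)) /=.
by apply: eq_bigr => m _; rewrite mcoeff_map_mpoly.
Qed.

Lemma piF_lift f' : piF (map_mpoly (@zvalr F) f') = map_mpoly (@phi F) f'.
Proof. by rewrite /piF map_comp //; apply: zvalr_inj. Qed.

Lemma lift_coeffs f : (forall m, m \in msupp f -> pint F f@_m) -> lifted f.
Proof.
move=> h.
exists (\sum_(m <- msupp f) (insubd (0 : zp F) f@_m) *: 'X_[m]).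
rewrite raddf_sum /= {1}(mpolyE f) big_seq_cond [RHS]big_seq_cond.
apply: eq_bigr => m /andP [hm _]; rewrite map_mpolyZ map_mpolyX.
have e := insubdK (0 : zp F) (h m hm); congr (_ *: _); exact: esym e.
Qed.

Lemma piF0 : piF 0 = 0.
Proof. by rewrite /piF /map_mpoly /mmap msupp0 big_nil. Qed.

Variable le : rel 'X_{1..n}.
Hypothesis hle : term_order le.
Variable I : {mpoly rat[n]} -> Prop.
Hypothesis hI : is_ideal I.
Variable G : seq {mpoly rat[n]}.
Hypothesis hG : reduced_GB le I G.
Hypothesis Glift : forall g, g \in G -> lifted g.

Lemma key f : I f -> lifted f -> ideal_gen (map piF G) (piF f).
Proof.
case: hI => I0 ID IM.
case: hG => _ _ Hlm Hmon _.
case: (eqVneq f 0) => [-> _ _|]; first by rewrite piF0; apply: ig0.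
move=> hf0 hIf hlf.
suff : forall m f, I f -> lifted f -> f != 0 -> lm le f = m ->
  ideal_gen (map piF G) (piF f) by move=> H; exact: (H _ f hIf hlf hf0 erefl).
apply: (le_ind hle) => m IH {hf0 hIf hlf}f hIf [f' ef] hf0 hm; subst f.
have [g hg hdiv] := Hlm _ hIf hf0.
have [g' eg] := Glift hg.
have [_ hg1] := Hmon g hg.
set d := (lm le (map_mpoly (@zvalr F) f') - lm le g)%MM.
set a' := f'@_(lm le (map_mpoly (@zvalr F) f')).
set fr' := f' - (a' *: 'X_[d]) * g'.
have efr : map_mpoly (@zvalr F) fr' =
   map_mpoly (@zvalr F) f' - ((map_mpoly (@zvalr F) f')@_(lm le (map_mpoly (@zvalr F) f')) *: 'X_[d]) * g.
  by rewrite /fr' rmorphB rmorphM /= map_mpolyZ map_mpolyX eg mcoeff_map_mpoly.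
have hIfr : I (map_mpoly (@zvalr F) fr').
  rewrite efr; apply: ID => //; rewrite -mulNr; apply: IM.
  by case: hG => _ hIG _ _ _; apply/hIG; apply: igG.
have -> : f' = fr' + (a' *: 'X_[d]) * g' by rewrite /fr' subrK.
rewrite piF_lift rmorphD rmorphM /=.
apply: igD; last first.
  apply: igM; rewrite -piF_lift -eg; apply: igG; exact: map_f.
rewrite -piF_lift.
case: (eqVneq (map_mpoly (@zvalr F) fr') 0) => [->|hnz]; first by rewrite piF0; apply: ig0.
have hin := lm_in hle hnz.
rewrite efr in hin.
have /andP [h1 h2] := reduce_lt hle hg1 hdiv hin.
rewrite -efr in h1 h2.
apply: (IH (lm le (map_mpoly (@zvalr F) fr'))) => //; first by rewrite -hm.
  by rewrite -hm.
by exists fr'.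
Qed.

End Main.

Lemma dvdn_biglcm (T : eqType) (s : seq T) (Fn : T -> nat) x :
  x \in s -> (Fn x %| \big[lcmn/1%N]_(y <- s) Fn y)%N.
Proof.
elim: s => //= y s IH; rewrite inE big_cons => /orP [/eqP ->|/IH h].
  exact: dvdn_lcml.
exact: dvdn_trans h (dvdn_lcmr _ _).
Qed.

Lemma pint_Fp (p : nat) (q : rat) : prime p -> ~~ (p %| `|denq q|)%N -> pint 'F_p q.
Proof.
move=> pp h; rewrite /pint -absz_denq; change ((`|denq q|%N)%:R != 0 :> 'F_p).
by rewrite -(dvdn_pcharf (pchar_Fp pp)).
Qed.

Lemma G_lift (n p D : nat) (G : seq {mpoly rat[n]}) : prime p -> ~~ (p %| D)%N ->
  (den_set G %| D)%N -> forall g, g \in G -> lifted 'F_p g.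
Proof.
move=> pp hpD hG g hg; apply: lift_coeffs => m hm; apply: pint_Fp => //.
apply: contra hpD => hp.
have h1 : (`|denq g@_m| %| den g)%N by apply: (dvdn_biglcm (fun m => `|denq g@_m|%N) hm).
have h2 : (den g %| den_set G)%N by apply: (dvdn_biglcm (@den n) hg).
exact: dvdn_trans hp (dvdn_trans h1 (dvdn_trans h2 hG)).
Qed.

Lemma incl (n p : nat) (I : {mpoly rat[n]} -> Prop) (le1 le2 : rel 'X_{1..n})
  (G1 G2 : seq {mpoly rat[n]}) :
  is_ideal I -> term_order le1 -> reduced_GB le1 I G1 -> reduced_GB le2 I G2 ->
  (forall g, g \in G1 -> lifted 'F_p g) -> (forall g, g \in G2 -> lifted 'F_p g) ->
  forall f, ideal_gen (map (@pi_p p n) G2) f -> ideal_gen (map (@pi_p p n) G1) f.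
Proof.
move=> hI hle1 hG1 hG2 L1 L2 f [c ->].
apply: ig_sum => i; apply: igM.
have : (map (@pi_p p n) G2)`_i \in map (@pi_p p n) G2 by apply: mem_nth.
case/mapP => g hg ->.
apply: (key hle1 hI hG1 L1); last exact: L2.
case: hG2 => _ hIG _ _ _; apply/hIG; exact: igG.
Qed.

Unset Implicit Arguments.
Theorem proposition2p14 (n : nat) (I : {mpoly rat[n]} -> Prop) (D p : nat) :
  is_ideal I -> universal_denominator I D -> prime p -> ~~ (p %| D)%N ->
  forall (le1 le2 : rel 'X_{1..n}) (G1 G2 : seq {mpoly rat[n]}),
    term_order le1 -> term_order le2 ->
    reduced_GB le1 I G1 -> reduced_GB le2 I G2 ->
    forall f : {mpoly 'F_p[n]},
      ideal_gen (map (@pi_p p n) G1) f <-> ideal_gen (map (@pi_p p n) G2) f.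
Proof.
move=> hI [hD _] pp hpD le1 le2 G1 G2 ho1 ho2 hG1 hG2 f.
have L1 := G_lift pp hpD (hD _ _ ho1 hG1).
have L2 := G_lift pp hpD (hD _ _ ho2 hG2).
split; [exact: (incl hI ho2 hG2 hG1 L2 L1) | exact: (incl hI ho1 hG1 hG2 L1 L2)].
Qed.
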